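(* Let $a,b,c,\gamma\in\mathbb{R}$ with $b\gamma\neq 0$, and let $\Omega\subset\mathbb{R}$ be a compact interval containing $0$ in its interior. Then the control system on $\mathbb{R}^2$ $$\dot s=\omega b,\qquad \dot t=(\gamma+a\omega)s+c\omega,\qquad \omega\in\Omega,$$ is controllable, i.e. for every $\mathbf v\in\mathbb{R}^2$ the positive orbit $\mathcal O^+(\mathbf v)=\{\varphi(\tau,\mathbf v,\omega):\tau\geq 0,\ \omega\in\mathcal U\}$ equals $\mathbb{R}^2$.
   Context: $\mathcal U$ denotes the set of piecewise constant functions $\omega:\mathbb{R}\to\Omega$ (controls), and $\varphi(\tau,\mathbf v,\omega)$ denotes the solution of the system at time $\tau$ with initial state $\mathbf v$ and control $\omega$. *)

(* Defs.v *)
From Stdlib Require Import Reals List.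
From Coquelicot Require Import Coquelicot.
Open Scope R_scope.

Definition loc_const (w : R -> R) (u : R) : Prop :=
  exists d : R, 0 < d /\ forall y : R, Rabs (y - u) < d -> w y = w u.

Definition piecewise_constant (w : R -> R) : Prop :=
  forall al be : R, exists l : list R,
    forall u : R, al < u < be -> ~ In u l -> loc_const w u.

Definition admissible (lo hi : R) (w : R -> R) : Prop :=
  piecewise_constant w /\ forall u : R, lo <= w u <= hi.

(* (s, t) : R -> R^2 is the (Caratheodory) solution of
     s' = w b,  t' = (gamma + a w) s + c w
   with initial state v at time 0: continuous everywhere, and satisfying the
   ODE at every time where the control is locally constant (i.e. outside the
   switching times, which are finite on bounded intervals). *)
Definition is_solution (a b c gamma : R) (w : R -> R) (v : R * R)
  (s t : R -> R) : Prop :=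
  s 0 = fst v /\ t 0 = snd v /\
  (forall u : R, continuous s u /\ continuous t u) /\
  (forall u : R, loc_const w u ->
     is_derive s u (w u * b) /\
     is_derive t u ((gamma + a * w u) * s u + c * w u)).

Definition pos_orbit (a b c gamma lo hi : R) (v : R * R) : R * R -> Prop :=
  fun z => exists (tau : R) (w : R -> R) (s t : R -> R),
    0 <= tau /\ admissible lo hi w /\ is_solution a b c gamma w v s t /\
    z = (s tau, t tau).

(* Main.v *)
Require Import Defs.
From Stdlib Require Import Reals Lra List.
From Coquelicot Require Import Coquelicot.
Open Scope R_scope.
Lemma ballR (x e y : R) : ball x e y -> Rabs (Rminus y x) < e.
Proof. intro H. exact H. Qed.
Lemma locally_lt (u T : R) : u < T -> locally u (fun y => y < T).
Proof. intros H. assert (Hp : 0 < T - u) by lra. exists (mkposreal _ Hp).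
intros y Hy. apply ballR in Hy. simpl in Hy. apply Rabs_def2 in Hy. lra. Qed.
Lemma locally_gt (u T : R) : T < u -> locally u (fun y => T < y).
Proof. intros H. assert (Hp : 0 < u - T) by lra. exists (mkposreal _ Hp).
intros y Hy. apply ballR in Hy. simpl in Hy. apply Rabs_def2 in Hy. lra. Qed.

Definition pw (T : R) (f g : R -> R) (y : R) : R := if Rle_dec y T then f y else g y.

Lemma pw_left T f g y : y <= T -> pw T f g y = f y.
Proof. intro H. unfold pw. destruct (Rle_dec y T); [reflexivity| lra]. Qed.
Lemma pw_right T f g y : T < y -> pw T f g y = g y.
Proof. intro H. unfold pw. destruct (Rle_dec y T); [lra| reflexivity]. Qed.

Lemma paste_cont (f g : R -> R) T u : continuous f u -> continuous g u -> f T = g T ->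
  continuous (pw T f g) u.
Proof.
intros Hf Hg HT. destruct (Rtotal_order u T) as [H|[H|H]].
- apply continuous_ext_loc with f; [|exact Hf].
  apply filter_imp with (2 := locally_lt u T H). intros y Hy. rewrite pw_left; lra.
- subst u. unfold continuous. apply filterlim_locally. intro eps.
  pose proof (proj1 (filterlim_locally _ _) Hf eps) as A.
  pose proof (proj1 (filterlim_locally _ _) Hg eps) as B.
  apply filter_imp with (2 := filter_and _ _ A B). intros y [Ay By].
  rewrite (pw_left T f g T (Rle_refl T)). unfold pw. destruct (Rle_dec y T).
  + exact Ay.
  + rewrite HT. exact By.
- apply continuous_ext_loc with g; [|exact Hg].
  apply filter_imp with (2 := locally_gt u T H). intros y Hy. rewrite pw_right; lra.
Qed.
Definition segS (b k x u0 u : R) : R := x + k*b*(u-u0).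
Definition segT (a b c g k x y u0 u : R) : R :=
  y + (g + a*k)*(x*(u-u0) + k*b*(u-u0)^2/2) + c*k*(u-u0).

Definition Good (a b c g lo hi : R) (w s t : R -> R) : Prop :=
  admissible lo hi w /\ (forall u, continuous s u /\ continuous t u) /\
  (forall u, loc_const w u -> is_derive s u (w u * b) /\
     is_derive t u ((g + a * w u) * s u + c * w u)).

Lemma segS_der b k x u0 (u : R) : is_derive (segS b k x u0) u (k * b).
Proof. unfold segS. auto_derive; [exact I| ring]. Qed.
Lemma segT_der a b c g k x y u0 (u : R) :
  is_derive (segT a b c g k x y u0) u ((g + a*k) * segS b k x u0 u + c * k).
Proof. unfold segT, segS. auto_derive; [exact I| field]. Qed.

Lemma seg_good a b c g lo hi k x y u0 : lo <= k <= hi ->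
  Good a b c g lo hi (fun _ => k) (segS b k x u0) (segT a b c g k x y u0).
Proof.
intros Hk. split; [split|split].
- intros al be. exists nil. intros u _ _. exists 1. split; [lra| reflexivity].
- intros _; exact Hk.
- intros u. split.
  + apply (ex_derive_continuous (segS b k x u0) u). eexists; apply segS_der.
  + apply (ex_derive_continuous (segT a b c g k x y u0) u). eexists; apply segT_der.
- intros u _. split; [apply segS_der | apply segT_der].
Qed.

Lemma concat a b c g lo hi w1 s1 t1 k x y T :
  Good a b c g lo hi w1 s1 t1 -> lo <= k <= hi ->
  s1 T = x -> t1 T = y -> w1 T <> k ->
  Good a b c g lo hi (pw T w1 (fun _ => k)) (pw T s1 (segS b k x T))
     (pw T t1 (segT a b c g k x y T)).
Proof.
intros [[Hpc Hr] [Hc Hd]] Hk Hs Ht Hw. split; [split|split].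
- intros al be. destruct (Hpc al be) as [l Hl]. exists (T :: l).
  intros u Hu Hin. destruct (Rtotal_order u T) as [H|[H|H]].
  + destruct (Hl u Hu (fun h => Hin (or_intror h))) as [d [Hd0 Hd1]].
    exists (Rmin d (T - u)). split.
    { apply Rmin_pos; lra. }
    intros z Hz. assert (Hz1 : Rabs (z - u) < d) by (eapply Rlt_le_trans; [exact Hz| apply Rmin_l]).
    assert (Hz2 : Rabs (z - u) < T - u) by (eapply Rlt_le_trans; [exact Hz| apply Rmin_r]).
    apply Rabs_def2 in Hz2. rewrite !pw_left by lra. apply Hd1; exact Hz1.
  + exfalso. apply Hin. left. auto.
  + exists (u - T). split; [lra|]. intros z Hz. apply Rabs_def2 in Hz.
    rewrite !pw_right by lra. reflexivity.
- intros u. unfold pw. destruct (Rle_dec u T); auto.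
- intros u. split; apply paste_cont; try apply Hc.
  + apply (ex_derive_continuous (segS b k x T) u). eexists; apply segS_der.
  + unfold segS. rewrite Hs. ring.
  + apply (ex_derive_continuous (segT a b c g k x y T) u). eexists; apply segT_der.
  + unfold segT. rewrite Ht. field.
- intros u [d [Hd0 Hd1]]. destruct (Rtotal_order u T) as [H|[H|H]].
  + assert (Hlc : loc_const w1 u).
    { exists (Rmin d (T - u)). split. { apply Rmin_pos; lra. }
      intros z Hz. assert (Hz1 : Rabs (z - u) < d) by (eapply Rlt_le_trans; [exact Hz| apply Rmin_l]).
      assert (Hz2 : Rabs (z - u) < T - u) by (eapply Rlt_le_trans; [exact Hz| apply Rmin_r]).
      apply Rabs_def2 in Hz2. pose proof (Hd1 z Hz1) as E. rewrite !pw_left in E by lra. exact E. }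
    destruct (Hd u Hlc) as [D1 D2]. rewrite !pw_left by lra. split.
    * apply is_derive_ext_loc with s1; [|exact D1].
      apply filter_imp with (2 := locally_lt u T H). intros z Hz. rewrite pw_left; lra.
    * apply is_derive_ext_loc with t1; [|exact D2].
      apply filter_imp with (2 := locally_lt u T H). intros z Hz. rewrite pw_left; lra.
  + subst u. exfalso. assert (E := Hd1 (T + d/2)).
    rewrite pw_right in E by lra. rewrite pw_left in E by lra.
    apply Hw. symmetry. apply E. replace (T + d/2 - T) with (d/2) by ring.
    rewrite Rabs_pos_eq; lra.
  + rewrite !pw_right by lra. split.
    * apply is_derive_ext_loc with (segS b k x T); [|apply segS_der].
      apply filter_imp with (2 := locally_gt u T H). intros z Hz. rewrite pw_right; lra.
    * apply is_derive_ext_loc with (segT a b c g k x y T); [|apply segT_der].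
      apply filter_imp with (2 := locally_gt u T H). intros z Hz. rewrite pw_right; lra.
Qed.

Definition kk (b lo hi x y : R) : R :=
  if Rlt_dec 0 ((y - x) * b) then Rmin hi (- lo) else - Rmin hi (- lo).

Lemma kk_props b lo hi x y : b <> 0 -> lo < 0 < hi ->
  lo <= kk b lo hi x y <= hi /\ kk b lo hi x y <> 0 /\
  (x <> y -> 0 < (y - x) / (kk b lo hi x y * b)).
Proof.
intros Hb Hl. assert (Hm : 0 < Rmin hi (- lo)) by (apply Rmin_pos; lra).
assert (Hm1 := Rmin_l hi (-lo)). assert (Hm2 := Rmin_r hi (-lo)).
assert (Hbb : 0 < b * b) by (destruct (Rtotal_order b 0) as [H|[H|H]]; [nra|contradiction|nra]).
unfold kk. destruct (Rlt_dec 0 ((y - x) * b)) as [H|H].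
- split; [lra|split; [lra|]]. intros _.
  replace ((y - x) / (Rmin hi (- lo) * b)) with (((y - x) * b) * / (Rmin hi (- lo) * (b * b))) by (field; lra).
  apply Rmult_lt_0_compat; [lra|]. apply Rinv_0_lt_compat. nra.
- split; [lra|split; [lra|]]. intros Hxy.
  assert (H' : (y - x) * b < 0).
  { destruct (Rtotal_order ((y - x) * b) 0) as [h|[h|h]]; [exact h| |lra].
    apply Rmult_integral in h. destruct h; [exfalso; apply Hxy; lra| contradiction]. }
  replace ((y - x) / (- Rmin hi (- lo) * b)) with ((-((y - x) * b)) * / (Rmin hi (- lo) * (b * b))) by (field; lra).
  apply Rmult_lt_0_compat; [lra|]. apply Rinv_0_lt_compat. nra.
Qed.

Definition Dl (a b c g k x d : R) : R := (g + a*k)*(x*d + k*b*d^2/2) + c*k*d.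

Lemma Rmax_diff X : Rmax X 0 - Rmax (- X) 0 = X.
Proof. unfold Rmax. destruct (Rle_dec X 0); destruct (Rle_dec (-X) 0); lra. Qed.

Theorem proposition6 (a b c gamma lo hi : R) :
  b * gamma <> 0 -> lo < 0 < hi ->
  forall v z : R * R, pos_orbit a b c gamma lo hi v z.
Proof.
intros Hbg Hl [s0 t0] [s1 t1].
set (g := gamma).
assert (Hb : b <> 0) by (intro h; apply Hbg; rewrite h; ring).
assert (Hg : g <> 0) by (intro h; apply Hbg; unfold g in h; rewrite h; ring).
set (e := g / Rabs g).
assert (Hge : g * e = Rabs g).
{ unfold e. destruct (Rcase_abs g) as [h|h].
  - rewrite Rabs_left by lra. field. lra.
  - rewrite Rabs_right by lra. field. lra. }
assert (He : e = 1 \/ e = -1).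
{ unfold e. destruct (Rcase_abs g) as [h|h].
  - right. rewrite Rabs_left by lra. field. lra.
  - left. rewrite Rabs_right by lra. field. lra. }
assert (Hag := Rabs_pos_lt g Hg).
assert (Ha0 := Rabs_pos s0). assert (Ha1 := Rabs_pos s1).
assert (Hs0 := Rle_abs s0). assert (Hs0' := Rle_abs (- s0)). rewrite Rabs_Ropp in Hs0'.
assert (Hs1 := Rle_abs s1). assert (Hs1' := Rle_abs (- s1)). rewrite Rabs_Ropp in Hs1'.
set (p := e * (Rabs s0 + 1)).
set (q := - e * (Rabs s1 + 1)).
assert (Hgp : 0 < g * p).
{ unfold p. rewrite <- Rmult_assoc, Hge. nra. }
assert (Hgq : g * q < 0).
{ unfold q. replace (g * (- e * (Rabs s1 + 1))) with (- ((g * e) * (Rabs s1 + 1))) by ring.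
  rewrite Hge. nra. }
assert (Hp0 : s0 <> p) by (unfold p; destruct He as [h|h]; rewrite h; lra).
assert (Hq1 : q <> s1) by (unfold q; destruct He as [h|h]; rewrite h; lra).
assert (Hpq : p <> q) by (unfold p, q; destruct He as [h|h]; rewrite h; lra).
set (k1 := kk b lo hi s0 p). destruct (kk_props b lo hi s0 p Hb Hl) as [Hk1 [Hk1n Hk1d]].
set (k2 := kk b lo hi p q). destruct (kk_props b lo hi p q Hb Hl) as [Hk2 [Hk2n Hk2d]].
set (k3 := kk b lo hi q s1). destruct (kk_props b lo hi q s1 Hb Hl) as [Hk3 [Hk3n Hk3d]].
fold k1 in Hk1, Hk1n, Hk1d. fold k2 in Hk2, Hk2n, Hk2d. fold k3 in Hk3, Hk3n, Hk3d.
set (d1 := (p - s0) / (k1 * b)). assert (Hd1 : 0 < d1) by (apply Hk1d; exact Hp0).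
set (d2 := (q - p) / (k2 * b)). assert (Hd2 : 0 < d2) by (apply Hk2d; exact Hpq).
set (d3 := (s1 - q) / (k3 * b)). assert (Hd3 : 0 < d3) by (apply Hk3d; exact Hq1).
set (X := t1 - t0 - Dl a b c g k1 s0 d1 - Dl a b c g k2 p d2 - Dl a b c g k3 q d3).
set (Tp := (Rmax X 0 + 1) / (g * p)).
set (Tq := (Rmax (- X) 0 + 1) / (- (g * q))).
assert (HTp : 0 < Tp).
{ unfold Tp. apply Rdiv_lt_0_compat; [|exact Hgp]. assert (H := Rmax_r X 0). lra. }
assert (HTq : 0 < Tq).
{ unfold Tq. apply Rdiv_lt_0_compat; [|lra]. assert (H := Rmax_r (- X) 0). lra. }
assert (HX : g * p * Tp + g * q * Tq = X).
{ unfold Tp, Tq. transitivity (Rmax X 0 - Rmax (- X) 0); [|apply Rmax_diff].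
  assert (Hp00 : p <> 0) by (intro h; rewrite h in Hgp; lra).
  assert (Hq00 : q <> 0) by (intro h; rewrite h in Hgq; lra).
  field. repeat split; assumption. }
set (tau1 := d1). set (tau2 := tau1 + Tp). set (tau3 := tau2 + d2).
set (tau4 := tau3 + Tq). set (tau := tau4 + d3).
set (th1 := t0 + Dl a b c g k1 s0 d1).
set (th2 := th1 + g * p * Tp).
set (th3 := th2 + Dl a b c g k2 p d2).
set (th4 := th3 + g * q * Tq).
assert (Hk0 : lo <= 0 <= hi) by lra.
pose proof (seg_good a b c g lo hi k1 s0 t0 0 Hk1) as G1.
assert (G2 := concat a b c g lo hi _ _ _ 0 p th1 tau1 G1 Hk0).
specialize (G2 ltac:(unfold segS, tau1, d1; field; split; assumption)).
specialize (G2 ltac:(unfold segT, th1, Dl, tau1; field)).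
specialize (G2 ltac:(exact Hk1n)).
assert (G3 := concat a b c g lo hi _ _ _ k2 p th2 tau2 G2 Hk2).
specialize (G3 ltac:(rewrite pw_right by (unfold tau2; lra); unfold segS; ring)).
specialize (G3 ltac:(rewrite pw_right by (unfold tau2; lra); unfold segT, th2, tau2; field)).
specialize (G3 ltac:(rewrite pw_right by (unfold tau2; lra); intro h; apply Hk2n; symmetry; exact h)).
assert (G4 := concat a b c g lo hi _ _ _ 0 q th3 tau3 G3 Hk0).
specialize (G4 ltac:(rewrite pw_right by (unfold tau3; lra); unfold segS, tau3, d2; field; split; assumption)).
specialize (G4 ltac:(rewrite pw_right by (unfold tau3; lra); unfold segT, th3, Dl, tau3; field)).
specialize (G4 ltac:(rewrite pw_right by (unfold tau3; lra); exact Hk2n)).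
assert (G5 := concat a b c g lo hi _ _ _ k3 q th4 tau4 G4 Hk3).
specialize (G5 ltac:(rewrite pw_right by (unfold tau4; lra); unfold segS; ring)).
specialize (G5 ltac:(rewrite pw_right by (unfold tau4; lra); unfold segT, th4, tau4; field)).
specialize (G5 ltac:(rewrite pw_right by (unfold tau4; lra); intro h; apply Hk3n; symmetry; exact h)).
destruct G5 as [Gadm [Gc Gd]].
eexists tau, _, _, _. split; [|split; [exact Gadm|split; [split; [|split; [|split; [exact Gc| exact Gd]]]|]]].
- unfold tau, tau4, tau3, tau2, tau1. lra.
- simpl. rewrite !pw_left by (unfold tau4, tau3, tau2, tau1; lra). unfold segS. ring.
- simpl. rewrite !pw_left by (unfold tau4, tau3, tau2, tau1; lra). unfold segT. field.
- rewrite !pw_right by (unfold tau, tau4; lra). f_equal.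
  + unfold segS, tau, d3. field. split; assumption.
  + unfold segT. replace (tau - tau4) with d3 by (unfold tau; ring).
    assert (HD3 : Dl a b c g k3 q d3 = (g + a * k3) * (q * d3 + k3 * b * d3 ^ 2 / 2) + c * k3 * d3) by reflexivity.
    unfold th4, th3, th2, th1. unfold X in HX. lra.
Qed.
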